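(* Let $k\ge2$, $a_1\in A_1$ and $b_1\in Ab$. Then the map $a\mapsto a_1$, $b\mapsto b_1$ extends to an automorphism of the group $BS(1,k)$.
   Context: $BS(1,k)=\langle a,b\mid b^{-1}ab=a^k\rangle$, identified with $\mathbb{Z}[1/k]\rtimes\mathbb{Z}$ (pairs $(y,m)$, $y\in\mathbb{Z}[1/k]=\{zk^i:z,i\in\mathbb{Z}\}$, $m\in\mathbb{Z}$, product $(y_1,m_1)(y_2,m_2)=(y_1+y_2k^{-m_1},m_1+m_2)$), with $a=(1,0)$, $b=(0,1)$. $A=\{(y,0): y\in\mathbb{Z}[1/k]\}$ is the normal closure of $a$; for $u=(y,0)\in A$ and $s\in\mathbb{Z}[1/k]$ write $u^s=(ys,0)$, so $A=\{a^y:y\in\mathbb{Z}[1/k]\}$. $A_1=\{a^y: y \text{ a unit of }\mathbb{Z}[1/k]\}$ and $Ab=\{a^yb: y\in\mathbb{Z}[1/k]\}$. *)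

(* Defs.v *)
(* BS(1,k) = Z[1/k] ⋊ Z realized inside rat * int. *)
From mathcomp Require Import all_boot all_order all_algebra.
Set Implicit Arguments. Unset Strict Implicit. Unset Printing Implicit Defensive.
Import Order.TTheory GRing.Theory Num.Theory.
Local Open Scope ring_scope.

Definition inZk (k : nat) (y : rat) : Prop :=
  exists (z i : int), y = z%:~R * (k%:R : rat) ^ i.

Definition unitZk (k : nat) (y : rat) : Prop :=
  inZk k y /\ exists w, inZk k w /\ y * w = 1.

Definition inBS (k : nat) (g : rat * int) : Prop := inZk k g.1.

Definition bsmul (k : nat) (g h : rat * int) : rat * int :=
  (g.1 + h.1 * (k%:R : rat) ^ (- g.2), g.2 + h.2).

Definition bs_a : rat * int := (1, 0).
Definition bs_b : rat * int := (0, 1).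

Definition is_bs_aut (k : nat) (f : rat * int -> rat * int) : Prop :=
  [/\ (forall g, inBS k g -> inBS k (f g)),
      (forall g h, inBS k g -> inBS k h -> f (bsmul k g h) = bsmul k (f g) (f h)),
      (forall g h, inBS k g -> inBS k h -> f g = f h -> g = h)
    & (forall h, inBS k h -> exists g, inBS k g /\ f g = h)].

(* Main.v *)
Require Import Defs.
From mathcomp Require Import all_boot all_order all_algebra.
From mathcomp Require Import ring.
Import GRing.Theory Num.Theory.
Local Open Scope ring_scope.

Set Implicit Arguments. Unset Strict Implicit.
Section Aux.
Variable k : nat.
Hypothesis hk : (2 <= k)%N.
Let K : rat := k%:R.

Lemma K0 : K != 0.
Proof. rewrite /K pnatr_eq0; by case: k hk. Qed.

Lemma Kn0 n : K ^+ n != 0.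
Proof. exact: expf_neq0 K0. Qed.

Lemma K1 : K - 1 != 0.
Proof.
rewrite subr_eq0 /K -[1 : rat]/(1%:R) eqr_nat.
by case: k hk => [|[|]].
Qed.

Lemma inZk_norm y : inZk k y -> exists (z : int) (n : nat), y = z%:~R / K ^+ n.
Proof.
case=> z [] [p|p] ->.
- exists (z * (k%:Z) ^+ p), 0%N.
  by rewrite expr0 divr1 intrM rmorphXn.
- by exists z, p.+1.
Qed.

Lemma inZk_of (z : int) (n : nat) : inZk k (z%:~R / K ^+ n).
Proof. by exists z, (- n%:Z); rewrite -exprnN. Qed.

Lemma inZkD y w : inZk k y -> inZk k w -> inZk k (y + w).
Proof.
move=> /inZk_norm [z [n ->]] /inZk_norm [z' [n' ->]].
have -> : z%:~R / K ^+ n + z'%:~R / K ^+ n' =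
  (z * (k%:Z) ^+ n' + z' * (k%:Z) ^+ n)%:~R / K ^+ (n + n').
  rewrite intrD !intrM !rmorphXn /= exprD.
  have h1 := Kn0 n; have h2 := Kn0 n'.
  by field; rewrite h1 h2.
exact: inZk_of.
Qed.

Lemma inZkM y w : inZk k y -> inZk k w -> inZk k (y * w).
Proof.
move=> /inZk_norm [z [n ->]] /inZk_norm [z' [n' ->]].
have -> : z%:~R / K ^+ n * (z'%:~R / K ^+ n') =
  (z * z')%:~R / K ^+ (n + n').
  rewrite intrM exprD.
  have h1 := Kn0 n; have h2 := Kn0 n'.
  by field; rewrite h1 h2.
exact: inZk_of.
Qed.

Lemma inZkN y : inZk k y -> inZk k (- y).
Proof.
move=> /inZk_norm [z [n ->]].
rewrite -mulNr -intrN; exact: inZk_of.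
Qed.

Fixpoint G (n : nat) : int := if n is n'.+1 then G n' * k%:Z + 1 else 0.

Lemma GE n : (K - 1) * (G n)%:~R = K ^+ n - 1.
Proof.
elim: n => [|n IH] /=; first by rewrite expr0 mulr0 subrr.
rewrite intrD intrM mulrDr mulrA IH exprSr /=.
rewrite /K; ring.
Qed.

Lemma GE' n : (G n)%:~R = (K ^+ n - 1) / (K - 1).
Proof.
apply: (mulfI K1); rewrite GE. have h2 := K1. field. by rewrite h2.
Qed.

Definition S (m : int) : rat := (1 - K ^ (- m)) * K / (K - 1).

Lemma inZkS m : inZk k (S m).
Proof.
case: m => n.
- have -> : S n = (G n * k%:Z)%:~R / K ^+ n.
    rewrite /S intrM -exprnN.
    rewrite GE' -[(k%:Z)%:~R]/K.
    have h1 := Kn0 n. have h2 := K1. field. by rewrite h1 h2.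
  exact: inZk_of.
- have -> : S (Negz n) = (- (G n.+1 * k%:Z))%:~R / K ^+ 0.
    rewrite /S NegzE opprK intrN intrM expr0 divr1.
    rewrite GE' -[(k%:Z)%:~R]/K -exprnP.
    have h2 := K1. field. by rewrite h2.
  exact: inZk_of.
Qed.

Lemma SD m n : S (m + n) = S m + S n * K ^ (- m).
Proof.
rewrite /S opprD expfzDr ?K0 //.
have h2 := K1. field. by rewrite h2.
Qed.

Lemma S0 : S 0 = 0.
Proof. by rewrite /S oppr0 expr0z subrr !mul0r. Qed.

Lemma S1 : S 1 = 1.
Proof.
rewrite /S exprN1. have h1 := K0. have h2 := K1. field. by rewrite h1 h2.
Qed.

End Aux.

(* a1 = a^{y1} = (y1,0) with y1 a unit of Z[1/k]; b1 = a^{y2} b = (y2,1) *)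
Theorem lemma4p1 (k : nat) (hk : (2 <= k)%N) (y1 y2 : rat) :
  unitZk k y1 -> inZk k y2 ->
  exists f : rat * int -> rat * int,
    [/\ is_bs_aut k f, f bs_a = (y1, 0%R) & f bs_b = (y2, 1%R)].
Proof.
move=> [hy1 [w [hw hyw]]] hy2.
exists (fun g => (y1 * g.1 + y2 * S k g.2, g.2)).
split.
- split.
  + move=> [g1 g2] /= hg; rewrite /inBS /=.
    exact: (inZkD hk (inZkM hk hy1 hg) (inZkM hk hy2 (inZkS hk g2))).
  + move=> [g1 g2] [h1 h2] _ _; rewrite /bsmul /=.
    rewrite (SD hk); congr (_, _); ring.
  + move=> [g1 g2] [h1 h2] _ _ /= [e1 e2]; subst h2.
    move: e1 => /addIr e1.
    by rewrite -[g1]mul1r -[h1]mul1r -hyw (mulrC y1) -!mulrA e1.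
  + move=> [z n] hz.
    exists ((z - y2 * S k n) * w, n); split.
    * rewrite /inBS /=; exact: (inZkM hk (inZkD hk hz (inZkN (inZkM hk hy2 (inZkS hk n)))) hw).
    * rewrite /= mulrCA hyw mulr1; congr (_, _); ring.
- by rewrite /= mulr1 (S0 k) mulr0 addr0.
- by rewrite /= mulr0 (S1 hk) mulr1 add0r.
Qed.
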